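(* Let $\mathbb{F}_q$ be a finite field and let $\mathcal{Q}=\mathbb{F}_q^3$ with the relation: $(x_1,y_1,z_1)$ and $(x_2,y_2,z_2)$ commute iff $x_1y_2-y_1x_2=z_1-z_2$. Then there exist three lines $L_1,L_2,L_3$ in $\mathbb{F}_q^3$ and a non-commuting subset of $\mathcal{Q}$ contained in $L_1\cup L_2\cup L_3$ of cardinality at least $3q-3$. Further, if $q>3$ and $\mathrm{char}(\mathbb{F}_q)\ne 2$, there exists a non-commuting subset of $\mathcal{Q}$ of cardinality $3q-2$ which is not contained in a union of three lines.
   Context: A line in $\mathbb{F}_q^3$ is a set $\{p+tv: t\in\mathbb{F}_q\}$ with $v\ne 0$. A subset of $\mathcal{Q}$ is non-commuting if no two distinct elements of it commute. *)

(* Defs.v *)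
From HB Require Import structures.
From mathcomp Require Import all_boot all_order all_algebra all_field.
Set Implicit Arguments. Unset Strict Implicit. Unset Printing Implicit Defensive.
Import GRing.Theory.
Local Open Scope ring_scope.

Definition i0 : 'I_3 := @Ordinal 3 0 isT.
Definition i1 : 'I_3 := @Ordinal 3 1 isT.
Definition i2 : 'I_3 := @Ordinal 3 2 isT.

Definition px {F : fieldType} (u : 'rV[F]_3) : F := u 0 i0.
Definition py {F : fieldType} (u : 'rV[F]_3) : F := u 0 i1.
Definition pz {F : fieldType} (u : 'rV[F]_3) : F := u 0 i2.

Definition qcommute {F : fieldType} (u v : 'rV[F]_3) : bool :=
  px u * py v - py u * px v == pz u - pz v.

Definition noncommuting {F : finFieldType} (S : {set 'rV[F]_3}) : Prop :=
  forall u v, u \in S -> v \in S -> u != v -> ~~ qcommute u v.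

Definition is_line {F : finFieldType} (L : {set 'rV[F]_3}) : Prop :=
  exists p v : 'rV[F]_3, v != 0 /\ L = [set p + t *: v | t : F].

(* Main.v *)
Require Import Defs.
From HB Require Import structures.
From mathcomp Require Import all_boot all_order all_algebra all_field.
From mathcomp Require Import ring.
Set Implicit Arguments. Unset Strict Implicit. Unset Printing Implicit Defensive.
Import GRing.Theory.
Local Open Scope ring_scope.

Definition mk {F : fieldType} (a b c : F) : 'rV[F]_3 := \row_(j < 3) [:: a; b; c]`_j.

Lemma mk_px (F : fieldType) (a b c : F) : px (mk a b c) = a.
Proof. by rewrite /px /mk mxE. Qed.
Lemma mk_py (F : fieldType) (a b c : F) : py (mk a b c) = b.
Proof. by rewrite /py /mk mxE. Qed.
Lemma mk_pz (F : fieldType) (a b c : F) : pz (mk a b c) = c.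
Proof. by rewrite /pz /mk mxE. Qed.

Lemma mk_eq (F : fieldType) (a b c a' b' c' : F) :
  mk a b c = mk a' b' c' -> [/\ a = a', b = b' & c = c'].
Proof.
move=> e; split.
- by rewrite -(mk_px a b c) e mk_px.
- by rewrite -(mk_py a b c) e mk_py.
- by rewrite -(mk_pz a b c) e mk_pz.
Qed.

Lemma qcomm_mk (F : fieldType) (a b c a' b' c' : F) :
  qcommute (mk a b c) (mk a' b' c') = (a * b' - b * a' == c - c').
Proof. by rewrite /qcommute !mk_px !mk_py !mk_pz. Qed.

Lemma mk_line (F : fieldType) (y c t : F) :
  mk 0 y 0 + t *: mk 1 0 c = mk t y (c * t).
Proof.
apply/rowP => j; rewrite !mxE.
case: j => [[|[|[|j]]] Hj] //=; ring.
Qed.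

Definition yv {F : fieldType} (y0 y1 y2 : F) (k : 'I_3) : F := [:: y0; y1; y2]`_k.
Definition cv {F : fieldType} (y0 y1 y2 : F) (k : 'I_3) : F := [:: y2; y0; y1]`_k.
Definition gp {F : fieldType} (y0 y1 y2 : F) (x : 'I_3 * F) : 'rV[F]_3 :=
  mk x.2 (yv y0 y1 y2 x.1) (cv y0 y1 y2 x.1 * x.2).
Definition Dom (F : finFieldType) : {set 'I_3 * F} := [set x | x.2 != 0].
Definition Sg {F : finFieldType} (y0 y1 y2 : F) : {set 'rV[F]_3} :=
  gp y0 y1 y2 @: Dom F.

Lemma cancel_nz (F : fieldType) (a t t' : F) : a != 0 -> t * a = t' * a -> t = t'.
Proof. by move=> a0; apply: mulIf. Qed.
Lemma contra_l (F : fieldType) (a b t t' : F) : t != 0 -> a != 0 -> t * a = t' * (b - b) -> False.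
Proof. by move=> t0 a0; rewrite subrr mulr0 => /eqP; rewrite mulf_eq0 (negPf t0) (negPf a0). Qed.
Lemma contra_r (F : fieldType) (a b t t' : F) : t' != 0 -> a != 0 -> t * (b - b) = t' * a -> False.
Proof. by move=> t0 a0; rewrite subrr mulr0 => /esym/eqP; rewrite mulf_eq0 (negPf t0) (negPf a0). Qed.

Lemma Sg_nc (F : finFieldType) (y0 y1 y2 : F) :
  y0 != y1 -> y0 != y2 -> y1 != y2 -> noncommuting (Sg y0 y1 y2).
Proof.
move=> d01 d02 d12 u v /imsetP[[k t] Ht ->] /imsetP[[k' t'] Ht' ->] neq.
move: Ht Ht'; rewrite !inE /= => Ht Ht'.
rewrite /gp qcomm_mk /=; apply/negP => /eqP E.
have key : t * (yv y0 y1 y2 k' - cv y0 y1 y2 k) = t' * (yv y0 y1 y2 k - cv y0 y1 y2 k').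
  have h : t * (yv y0 y1 y2 k' - cv y0 y1 y2 k) - t' * (yv y0 y1 y2 k - cv y0 y1 y2 k')
     = (t * yv y0 y1 y2 k' - yv y0 y1 y2 k * t') - (cv y0 y1 y2 k * t - cv y0 y1 y2 k' * t') by ring.
  by apply/eqP; rewrite -subr_eq0 h E subrr.
clear E; move: neq key; rewrite /gp.
case: k => [[|[|[|k]]] Hk] //; case: k' => [[|[|[|k']]] Hk'] //=;
 rewrite /yv /cv /= => neq key.
all: first [ by move: neq; rewrite (cancel_nz _ key) ?eqxx // subr_eq0 ?d01 ?d02 ?d12 // eq_sym ?d01 ?d02 ?d12
  | by apply: (contra_l Ht _ key); rewrite subr_eq0 ?d01 ?d02 ?d12 // eq_sym ?d01 ?d02 ?d12
  | by apply: (contra_r Ht' _ key); rewrite subr_eq0 ?d01 ?d02 ?d12 // eq_sym ?d01 ?d02 ?d12 ].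
Qed.

Lemma gp_inj (F : finFieldType) (y0 y1 y2 : F) :
  y0 != y1 -> y0 != y2 -> y1 != y2 -> injective (gp y0 y1 y2).
Proof.
move=> d01 d02 d12 [k t] [k' t'] /mk_eq [/= -> e _]; congr (_, _).
move: e; case: k => [[|[|[|k]]] Hk] //; case: k' => [[|[|[|k']]] Hk'] //=;
 rewrite /yv /= => e; try (by apply: val_inj);
 by move: d01 d02 d12; rewrite e ?eqxx //= eq_sym eqxx.
Qed.

Lemma card_Dom (F : finFieldType) : #|Dom F| = (3 * #|F|.-1)%N.
Proof.
have -> : Dom F = setX [set: 'I_3] [set~ (0 : F)].
  by apply/setP => -[k t]; rewrite !inE.
by rewrite cardsX cardsT card_ord cardsC1.
Qed.

Lemma card_Sg (F : finFieldType) (y0 y1 y2 : F) :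
  y0 != y1 -> y0 != y2 -> y1 != y2 -> #|Sg y0 y1 y2| = (3 * #|F|.-1)%N.
Proof. by move=> *; rewrite card_imset ?card_Dom //; apply: gp_inj. Qed.

Definition Ml {F : finFieldType} (y0 y1 y2 : F) (k : 'I_3) : {set 'rV[F]_3} :=
  [set mk 0 (yv y0 y1 y2 k) 0 + t *: mk 1 0 (cv y0 y1 y2 k) | t : F].

Lemma Ml_line (F : finFieldType) (y0 y1 y2 : F) k : is_line (Ml y0 y1 y2 k).
Proof.
exists (mk 0 (yv y0 y1 y2 k) 0), (mk 1 0 (cv y0 y1 y2 k)); split => //.
by apply/eqP => /(congr1 px); rewrite mk_px /px mxE => /eqP; rewrite oner_eq0.
Qed.

Lemma gp_Ml (F : finFieldType) (y0 y1 y2 : F) k t : gp y0 y1 y2 (k, t) \in Ml y0 y1 y2 k.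
Proof. by apply/imsetP; exists t => //; rewrite mk_line. Qed.

Lemma Ml_py (F : finFieldType) (y0 y1 y2 : F) k u : u \in Ml y0 y1 y2 k -> py u = yv y0 y1 y2 k.
Proof. by case/imsetP => t _ ->; rewrite mk_line mk_py. Qed.

Lemma Sg_sub (F : finFieldType) (y0 y1 y2 : F) :
  Sg y0 y1 y2 \subset Ml y0 y1 y2 i0 :|: Ml y0 y1 y2 i1 :|: Ml y0 y1 y2 i2.
Proof.
apply/subsetP => u /imsetP [[k t] _ ->].
case: k => [[|[|[|k]]] Hk] //.
- by rewrite !inE (_ : Ordinal Hk = i0) ?gp_Ml //; apply: val_inj.
- by rewrite !inE (_ : Ordinal Hk = i1) ?gp_Ml ?orbT //; apply: val_inj.
- by rewrite !inE (_ : Ordinal Hk = i2) ?gp_Ml ?orbT //; apply: val_inj.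
Qed.
From mathcomp Require Import zify.

Lemma part1 (F : finFieldType) :
  (exists L1 L2 L3 : {set 'rV[F]_3},
     [/\ is_line L1, is_line L2, is_line L3 &
       exists S : {set 'rV[F]_3},
         [/\ noncommuting S, S \subset L1 :|: L2 :|: L3 &
             (3 * #|F| - 3 <= #|S|)%N]]).
Proof.
have d01 : (0 : F) != 1 by rewrite eq_sym oner_eq0.
case: (boolP [exists a : F, (a != 0) && (a != 1)]) => [/existsP [a /andP [a0 a1]]|].
  exists (Ml 0 1 a i0), (Ml 0 1 a i1), (Ml 0 1 a i2); split; try exact: Ml_line.
  exists (Sg 0 1 a); split.
  - by apply: Sg_nc; rewrite // eq_sym.
  - exact: Sg_sub.
  - rewrite card_Sg ?(eq_sym 0) ?(eq_sym 1) //; lia.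
move/existsPn => hF.
have cF : (#|F| <= 2)%N.
  have c2 : (#|[set (0 : F)%R; 1%R]| <= 2)%N by rewrite cards2; case: (_ != _).
  rewrite -cardsT; apply: leq_trans c2.
  apply: subset_leq_card; apply/subsetP => x _; rewrite !inE.
  by move: (hF x); case: (x == 0); case: (x == 1).
pose e := mk (0 : F) 0 1.
have e0 : e != 0 by apply/eqP => /(congr1 pz); rewrite mk_pz /pz mxE => /eqP; rewrite oner_eq0.
pose u1 := mk (1 : F) 0 0. pose u2 := mk (0 : F) 1 0. pose u3 := mk (1 : F) 1 0.
exists [set u1 + t *: e | t : F], [set u2 + t *: e | t : F], [set u3 + t *: e | t : F].
split; try (by eexists; eexists; split; [exact: e0| reflexivity]).
exists (u1 |: [set u2; u3]); split.
- move=> u v; rewrite !inE => hu hv; move: hu hv => /orP[|/orP[]] /eqP -> /orP[|/orP[]] /eqP -> //;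
  rewrite ?eqxx // => _; rewrite qcomm_mk !(mulr0, mul0r, mulr1, subr0, sub0r, subrr) ?oppr_eq0 ?oner_eq0 //.
- apply/subsetP => u; rewrite !inE => /orP[|/orP[]] /eqP ->.
  + by apply/orP; left; apply/orP; left; apply/imsetP; exists 0; rewrite // scale0r addr0.
  + by apply/orP; left; apply/orP; right; apply/imsetP; exists 0; rewrite // scale0r addr0.
  + by apply/orP; right; apply/imsetP; exists 0; rewrite // scale0r addr0.
- rewrite cardsU1 cards2 !inE.
  have n12 : u1 != u2 by apply/eqP => /mk_eq [/eqP]; rewrite eq_sym (negPf d01).
  have n13 : u1 != u3 by apply/eqP => /mk_eq [_ /eqP]; rewrite (negPf d01).
  have n23 : u2 != u3 by apply/eqP => /mk_eq [/eqP]; rewrite (negPf d01).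
  rewrite n23 /=; move: n12 n13; rewrite !(eq_sym u1) => /negPf -> /negPf -> /=.
  have cF3 : (3 * #|F| - 3 <= 3)%N by lia.
  exact: cF3.
Qed.

Lemma qcomm_sym (F : fieldType) (u v : 'rV[F]_3) : qcommute u v = qcommute v u.
Proof.
rewrite /qcommute; apply/idP/idP => /eqP e; apply/eqP;
  rewrite -[RHS]opprB -e; ring.
Qed.

Lemma line_two (F : finFieldType) (L : {set 'rV[F]_3}) x y :
  is_line L -> x \in L -> y \in L -> x != y -> L = [set x + s *: (y - x) | s : F].
Proof.
move=> [p [v [v0 ->]]] /imsetP[t1 _ ->] /imsetP[t2 _ ->] nxy.
have dt : t2 - t1 != 0.
  apply/eqP => e; move/eqP: nxy; apply.
  have -> : t2 = t1 by apply/eqP; rewrite -subr_eq0 e.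
  by [].
apply/setP => w; apply/imsetP/imsetP => [[t _ ->]|[s _ ->]].
- exists ((t - t1) / (t2 - t1)) => //; apply/rowP => j; rewrite !mxE.
  by field.
- exists (t1 + s * (t2 - t1)) => //; apply/rowP => j; rewrite !mxE; ring.
Qed.

Lemma line_eq2 (F : finFieldType) (L M : {set 'rV[F]_3}) x y :
  is_line L -> is_line M -> x \in L -> y \in L -> x \in M -> y \in M -> x != y -> M = L.
Proof.
move=> lL lM xL yL xM yM nxy.
by rewrite (line_two lM xM yM nxy) (line_two lL xL yL nxy).
Qed.

Lemma pigeon (T : finType) (A L1 L2 L3 : {set T}) : A \subset L1 :|: L2 :|: L3 -> (3 < #|A|)%N ->
  (1 < #|A :&: L1|)%N \/ (1 < #|A :&: L2|)%N \/ (1 < #|A :&: L3|)%N.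
Proof.
move=> sA cA.
have e : A = (A :&: L1) :|: (A :&: L2) :|: (A :&: L3).
  by rewrite -!setIUr; apply/esym/setIidPl.
have h : (#|A| <= #|A :&: L1| + #|A :&: L2| + #|A :&: L3|)%N.
  rewrite {1}e !cardsU; lia.
case: (ltnP 1 #|A :&: L1|) => h1; first by left.
case: (ltnP 1 #|A :&: L2|) => h2; first by right; left.
case: (ltnP 1 #|A :&: L3|) => h3; first by right; right.
lia.
Qed.

Lemma pig3 (T : finType) (A B C L1 L2 L3 : {set T}) (P : T) :
  A <> B -> A <> C -> B <> C ->
  (A = L1 \/ A = L2 \/ A = L3) -> (B = L1 \/ B = L2 \/ B = L3) -> (C = L1 \/ C = L2 \/ C = L3) ->
  (P \in L1 \/ P \in L2 \/ P \in L3) -> P \in A \/ P \in B \/ P \in C.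
Proof.
move=> ab ac bc hA hB hC hP.
case: hA => [?|[?|?]]; case: hB => [?|[?|?]]; case: hC => [?|[?|?]]; subst; tauto.
Qed.

Lemma P_nc (F : finFieldType) (y0 y1 y2 Y : F) k t :
  Y != cv y0 y1 y2 k -> t != 0 -> ~~ qcommute (mk 0 Y 0) (gp y0 y1 y2 (k, t)).
Proof.
move=> hY ht; rewrite /gp qcomm_mk /=; apply/negP => /eqP e.
have h : (Y - cv y0 y1 y2 k) * t = (0 - cv y0 y1 y2 k * t) - (0 * yv y0 y1 y2 k - Y * t) by ring.
move/eqP: h; rewrite e subrr mulf_eq0 subr_eq0 (negPf hY) (negPf ht).
by [].
Qed.

Lemma part2 (F : finFieldType) :
  ((3 < #|F|)%N -> 2%N \notin [pchar F] ->
     exists S : {set 'rV[F]_3},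
       [/\ noncommuting S, #|S| = (3 * #|F| - 2)%N &
         ~ (exists L1 L2 L3 : {set 'rV[F]_3},
              [/\ is_line L1, is_line L2, is_line L3 &
                  S \subset L1 :|: L2 :|: L3])]).
Proof.
move=> q3 ch.
have two : (2%:R : F) != 0 by move: ch; rewrite inE /=.
have q4 : #|F| != 4%N.
  apply/eqP => e; move: ch; rewrite (@card_finPcharP F 2%N 2%N e) //.
have q5 : (4 < #|F|)%N by rewrite ltn_neqAle eq_sym q4 q3.
have d01 : (0 : F) != 1 by rewrite eq_sym oner_eq0.
have d02 : (0 : F) != -1 by rewrite eq_sym oppr_eq0 oner_eq0.
have d12 : (1 : F) != -1.
  apply/eqP => e; move: two; have -> : (2%:R : F) = 1 - (-1) by rewrite opprK.
  by rewrite -{1}e subrr eqxx.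
have [Y hY] : exists Y : F, [&& Y != 0, Y != 1 & Y != -1].
  case: (boolP [exists Y : F, [&& Y != 0, Y != 1 & Y != -1]]) => [/existsP //|/existsPn hF].
  have c3 : (#|F| <= 3)%N.
    have c : (#|(0 : F)%R |: [set 1%R; (-1)%R]| <= 3)%N by rewrite cardsU1 cards2; case: (_ \notin _); case: (_ != _).
    rewrite -cardsT; apply: leq_trans c; apply: subset_leq_card; apply/subsetP => x _; rewrite !inE.
    by move: (hF x); case: (x == 0); case: (x == 1); case: (x == -1).
  by move: (leq_ltn_trans c3 q3); rewrite ltnn.
case/and3P: hY => Y0 Y1 Y2.
pose P := mk 0 Y 0.
have PS : P \notin Sg 0 1 (-1).
  apply/imsetP => -[[k t]]; rewrite inE /= => ht /esym /mk_eq [/eqP] /=.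
  by rewrite (negPf ht).
have hYc : forall k, Y != cv 0 1 (-1) k.
  by case => [[|[|[|k]]] Hk] //=; rewrite /cv /=.
exists (P |: Sg 0 1 (-1)); split.
- move=> u v; rewrite !inE => /orP [/eqP ->|hu] /orP [/eqP ->|hv] //; try by rewrite eqxx.
  + move: hv => /imsetP [[k t] ht ->] _; apply: P_nc => //; by move: ht; rewrite inE.
  + move: hu => /imsetP [[k t] ht ->] _; rewrite qcomm_sym; apply: P_nc => //; by move: ht; rewrite inE.
  + exact: (Sg_nc d01 d02 d12 hu hv).
- rewrite cardsU1 PS card_Sg //; lia.
case=> L1 [L2 [L3 [l1 l2 l3 sub]]].
have hM : forall k, Ml 0 1 (-1) k = L1 \/ Ml 0 1 (-1) k = L2 \/ Ml 0 1 (-1) k = L3.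
  move=> k.
  pose T := [set gp 0 1 (-1) (k, t) | t in [set~ (0:F)]].
  have TS : T \subset L1 :|: L2 :|: L3.
    apply: subset_trans sub; apply/subsetP => u /imsetP [t ht ->].
    by rewrite setU1r //; apply/imsetP; exists (k, t) => //; rewrite inE; move: ht; rewrite !inE.
  have cT : (3 < #|T|)%N.
    rewrite card_imset ?cardsC1; first by rewrite -ltnS (ltn_predK q5).
    by move=> t t' /mk_eq [].
  have TM : T \subset Ml 0 1 (-1) k.
    by apply/subsetP => u /imsetP [t _ ->]; apply: gp_Ml.
  have key : forall L, is_line L -> (1 < #|T :&: L|)%N -> Ml 0 1 (-1) k = L.
    move=> L lL /card_gt1P [x [y [hx hy nxy]]].
    move: hx hy; rewrite !in_setI => /andP [xT xL] /andP [yT yL].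
    apply: (line_eq2 lL (Ml_line _ _ _ k) xL yL _ _ nxy); by apply: (subsetP TM).
  case: (pigeon TS cT) => [h|[h|h]].
  + by left; apply: key.
  + by right; left; apply: key.
  + by right; right; apply: key.
have hP : P \in L1 \/ P \in L2 \/ P \in L3.
  move: (subsetP sub P (setU11 _ _)); rewrite !inE => /orP [/orP [h|h]|h]; tauto.
have hne : forall k k' : 'I_3, yv 0 1 (-1 : F) k != yv 0 1 (-1) k' -> Ml (0 : F) 1 (-1) k <> Ml (0 : F) 1 (-1) k'.
  move=> k k' ne e; move: (@gp_Ml F 0 1 (-1) k 1); rewrite e => /Ml_py.
  by rewrite /gp mk_py => ee; move: ne; rewrite ee eqxx.
have := pig3 (hne i0 i1 d01) (hne i0 i2 d02) (hne i1 i2 d12) (hM i0) (hM i1) (hM i2) hP.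
by case=> [/Ml_py|[/Ml_py|/Ml_py]]; rewrite mk_py /yv /= => e; move: Y0 Y1 Y2; rewrite e eqxx.
Qed.

Theorem lemma7p5 (F : finFieldType) :
  (exists L1 L2 L3 : {set 'rV[F]_3},
     [/\ is_line L1, is_line L2, is_line L3 &
       exists S : {set 'rV[F]_3},
         [/\ noncommuting S, S \subset L1 :|: L2 :|: L3 &
             (3 * #|F| - 3 <= #|S|)%N]]) /\
  ((3 < #|F|)%N -> 2%N \notin [pchar F] ->
     exists S : {set 'rV[F]_3},
       [/\ noncommuting S, #|S| = (3 * #|F| - 2)%N &
         ~ (exists L1 L2 L3 : {set 'rV[F]_3},
              [/\ is_line L1, is_line L2, is_line L3 &
                  S \subset L1 :|: L2 :|: L3])]).
Proof.
split; [exact: part1 | exact: part2].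
Qed.
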